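(* For every LTL formula $\varphi$ in PNF and every $x\in\Sigma$, $\partial_x(\varphi)=\mathrm{d}_x(\varphi)$.
   Context: LTL formulae in PNF: $\varphi,\psi ::= p \mid \neg p \mid \mathbf{tt} \mid \mathbf{ff} \mid \varphi\wedge\psi \mid \varphi\vee\psi \mid \bigcirc\varphi \mid \varphi\,\mathcal{U}\,\psi \mid \varphi\,\mathcal{R}\,\psi$ (with $\Diamond\varphi=\mathbf{tt}\,\mathcal{U}\,\varphi$, $\Box\varphi=\mathbf{ff}\,\mathcal{R}\,\varphi$), words in $\Sigma^\omega$, interpretation $I:\Sigma\to\mathcal{P}(AP)$. Temporal formula: does not start with $\wedge$ or $\vee$. Monomials $\mu,\nu$: $\mathbf{ff}$ or consistent sets of literals; $x\models\mu$ means all literals of $\mu$ hold under $I(x)$; $\mu\sqcap\nu$ is $\mathbf{ff}$ if either is $\mathbf{ff}$ or $\mu\cup\nu$ is contradictory, else $\mu\cup\nu$. $\varphi\,\dot\wedge\,\psi$: formal conjunction normalized modulo associativity, commutativity, idempotence ($\mathbf{tt}$ = empty formal conjunction). $\mathrm{simp}(\varphi\wedge\psi)=\{\varphi'\,\dot\wedge\,\psi'\mid\varphi'\in\mathrm{simp}(\varphi),\psi'\in\mathrm{simp}(\psi)\}$, $\mathrm{simp}(\varphi\vee\psi)=\mathrm{simp}(\varphi)\cup\mathrm{simp}(\psi)$, $\mathrm{simp}(\varphi)=\{\varphi\}$ for temporal $\varphi$. Linear factors: $\mathrm{LF}(\ell)=\{\langle\{\ell\},\mathbf{tt}\rangle\}$,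 $\mathrm{LF}(\mathbf{tt})=\{\langle\mathbf{tt},\mathbf{tt}\rangle\}$, $\mathrm{LF}(\mathbf{ff})=\{\}$, $\mathrm{LF}(\varphi\vee\psi)=\mathrm{LF}(\varphi)\cup\mathrm{LF}(\psi)$, $\mathrm{LF}(\varphi\wedge\psi)=\{\langle\mu\sqcap\nu,\varphi'\,\dot\wedge\,\psi'\rangle\mid\langle\mu,\varphi'\rangle\in\mathrm{LF}(\varphi),\langle\nu,\psi'\rangle\in\mathrm{LF}(\psi),\mu\sqcap\nu\neq\mathbf{ff}\}$, $\mathrm{LF}(\bigcirc\varphi)=\{\langle\mathbf{tt},\varphi'\rangle\mid\varphi'\in\mathrm{simp}(\varphi)\}$, $\mathrm{LF}(\varphi\,\mathcal{U}\,\psi)=\mathrm{LF}(\psi)\cup\{\langle\mu,\varphi'\,\dot\wedge\,(\varphi\,\mathcal{U}\,\psi)\rangle\mid\langle\mu,\varphi'\rangle\in\mathrm{LF}(\varphi)\}$, $\mathrm{LF}(\varphi\,\mathcal{R}\,\psi)=\{\langle\mu\sqcap\nu,\varphi'\,\dot\wedge\,\psi'\rangle\mid\langle\mu,\varphi'\rangle\in\mathrm{LF}(\varphi),\langle\nu,\psi'\rangle\in\mathrm{LF}(\psi),\mu\sqcap\nu\neq\mathbf{ff}\}\cup\{\langle\nu,\psi'\,\dot\wedge\,(\varphi\,\mathcal{R}\,\psi)\rangle\mid\langle\nu,\psi'\rangle\in\mathrm{LF}(\psi)\}$. Partial derivatives via linear factors: $\partial_x(\varphi)=\{\varphi'\mid\langle\mu,\varphi'\rangle\in\mathrm{LF}(\varphi),x\models\mu\}$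 for temporal $\varphi$, $\partial_x(\mathbf{tt})=\{\mathbf{tt}\}$, $\partial_x(\varphi\,\dot\wedge\,\psi)=\{\varphi'\,\dot\wedge\,\psi'\mid\varphi'\in\partial_x(\varphi),\psi'\in\partial_x(\psi)\}$. Direct partial derivatives: $\mathrm{d}_x(\mathbf{tt})=\{\mathbf{tt}\}$, $\mathrm{d}_x(\mathbf{ff})=\{\}$, $\mathrm{d}_x(\ell)=\{\mathbf{tt}\}$ if $x\models\ell$ and $\{\}$ otherwise, $\mathrm{d}_x(\varphi\vee\psi)=\mathrm{d}_x(\varphi)\cup\mathrm{d}_x(\psi)$, $\mathrm{d}_x(\varphi\wedge\psi)=\{\varphi'\wedge\psi'\mid\varphi'\in\mathrm{d}_x(\varphi),\psi'\in\mathrm{d}_x(\psi)\}$, $\mathrm{d}_x(\bigcirc\varphi)=\mathrm{simp}(\varphi)$, $\mathrm{d}_x(\varphi\,\mathcal{U}\,\psi)=\mathrm{d}_x(\psi)\cup\{\varphi'\wedge(\varphi\,\mathcal{U}\,\psi)\mid\varphi'\in\mathrm{d}_x(\varphi)\}$, $\mathrm{d}_x(\varphi\,\mathcal{R}\,\psi)=\{\varphi'\wedge\psi'\mid\varphi'\in\mathrm{d}_x(\varphi),\psi'\in\mathrm{d}_x(\psi)\}\cup\{\psi'\wedge(\varphi\,\mathcal{R}\,\psi)\mid\psi'\in\mathrm{d}_x(\psi)\}$, $\mathrm{d}_x(\Diamond\varphi)=\mathrm{d}_x(\varphi)\cup\{\Diamond\varphi\}$, $\mathrm{d}_x(\Box\varphi)=\{\varphi'\wedge\Box\varphi\mid\varphi'\in\mathrm{d}_x(\varphi)\}$,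 where conjunctions of temporal formulae in results are normalized (as formal conjunctions). *)

(* Defs.v *)
From mathcomp Require Import all_boot.
From mathcomp Require Import boolp classical_sets.

Set Implicit Arguments.
Unset Strict Implicit.
Unset Printing Implicit Defensive.

Local Open Scope classical_set_scope.

(* LTL formulae in positive normal form over atomic propositions AP.
   [FLit p true] is the literal p, [FLit p false] is the literal ~p.
   Diamond/Box are the abbreviations tt U phi and ff R phi. *)
Inductive formula (AP : Type) : Type :=
  | FLit : AP -> bool -> formula AP
  | FTt : formula AP
  | FFf : formula AP
  | FAnd : formula AP -> formula AP -> formula AP
  | FOr : formula AP -> formula AP -> formula AP
  | FNext : formula AP -> formula AP
  | FUntil : formula AP -> formula AP -> formula AP
  | FRelease : formula AP -> formula AP -> formula AP.

Arguments FTt {AP}.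
Arguments FFf {AP}.

Definition FEventually {AP} (f : formula AP) := FUntil FTt f.
Definition FAlways {AP} (f : formula AP) := FRelease FFf f.

Definition literal (AP : Type) := (AP * bool)%type.

Definition lit_holds {AP Sigma : Type} (I : Sigma -> set AP) (x : Sigma)
  (l : literal AP) : Prop :=
  if l.2 then I x l.1 else ~ I x l.1.

(* formal conjunctions of temporal formulae, normalized modulo
   associativity, commutativity and idempotence: sets of temporal formulae.
   The empty formal conjunction is tt; formal conjunction is union. *)
Definition fconj (AP : Type) := set (formula AP).

(* monomials: None = ff, Some m = (consistent) set of literals;
   Some set0 = tt *)
Definition monomial (AP : Type) := option (set (literal AP)).

Definition contradictory {AP} (m : set (literal AP)) : Prop :=
  exists p, m (p, true) /\ m (p, false).

Definition mmeet {AP} (mu nu : monomial AP) : monomial AP :=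
  match mu, nu with
  | Some m, Some n => if `[< contradictory (m `|` n) >] then None
                      else Some (m `|` n)
  | _, _ => None
  end.

Definition msat {AP Sigma : Type} (I : Sigma -> set AP) (x : Sigma)
  (mu : monomial AP) : Prop :=
  match mu with
  | None => False
  | Some m => forall l, m l -> lit_holds I x l
  end.

Fixpoint simp {AP} (f : formula AP) : set (fconj AP) :=
  match f with
  | FAnd a b => [set c | exists c1 c2, simp a c1 /\ simp b c2 /\ c = c1 `|` c2]
  | FOr a b => simp a `|` simp b
  | FTt => [set set0]
  | _ => [set [set f]]
  end.

Fixpoint LF {AP} (f : formula AP) : set (monomial AP * fconj AP) :=
  match f with
  | FLit p b => [set (Some [set (p, b)], set0)]
  | FTt => [set (Some set0, set0)]
  | FFf => set0
  | FOr a b => LF a `|` LF b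
  | FAnd a b =>
      [set mc | exists m1 c1 m2 c2, LF a (m1, c1) /\ LF b (m2, c2) /\
                mmeet m1 m2 <> None /\ mc = (mmeet m1 m2, c1 `|` c2)]
  | FNext a => [set mc | exists c, simp a c /\ mc = (Some set0, c)]
  | FUntil a b =>
      LF b `|`
      [set mc | exists m c, LF a (m, c) /\ mc = (m, c `|` [set FUntil a b])]
  | FRelease a b =>
      [set mc | exists m1 c1 m2 c2, LF a (m1, c1) /\ LF b (m2, c2) /\
                mmeet m1 m2 <> None /\ mc = (mmeet m1 m2, c1 `|` c2)]
      `|`
      [set mc | exists m c, LF b (m, c) /\ mc = (m, c `|` [set FRelease a b])]
  end.

Definition pderiv {AP Sigma : Type} (I : Sigma -> set AP) (x : Sigma)
  (f : formula AP) : set (fconj AP) :=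
  [set c | exists mu, LF f (mu, c) /\ msat I x mu].

Fixpoint dderiv {AP Sigma : Type} (I : Sigma -> set AP) (x : Sigma)
  (f : formula AP) : set (fconj AP) :=
  match f with
  | FTt => [set set0]
  | FFf => set0
  | FLit p b => [set c | lit_holds I x (p, b) /\ c = set0]
  | FOr a b => dderiv I x a `|` dderiv I x b
  | FAnd a b =>
      [set c | exists c1 c2, dderiv I x a c1 /\ dderiv I x b c2 /\
               c = c1 `|` c2]
  | FNext a => simp a
  | FUntil a b =>
      dderiv I x b `|`
      [set c | exists c1, dderiv I x a c1 /\ c = c1 `|` [set FUntil a b]]
  | FRelease a b =>
      [set c | exists c1 c2, dderiv I x a c1 /\ dderiv I x b c2 /\
               c = c1 `|` c2]
      `|`
      [set c | exists c2, dderiv I x b c2 /\ c = c2 `|` [set FRelease a b]]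
  end.

(* Main.v *)
Require Import Defs.
From mathcomp Require Import all_boot.
From mathcomp Require Import boolp classical_sets.

Local Open Scope classical_set_scope.

Lemma msat_mmeet (AP Sigma : Type) (I : Sigma -> set AP) (x : Sigma)
  (m1 m2 : monomial AP) :
  msat I x (mmeet m1 m2) <-> msat I x m1 /\ msat I x m2.
Proof.
case: m1 => [m1|]; case: m2 => [m2|] /=; try tauto.
case: asboolP => [[p [Ht Hf]]|Hnc] /=.
  split=> // [[H1 H2]].
  have Ht' : lit_holds I x (p, true) by case: Ht => H; [apply: H1|apply: H2].
  have Hf' : lit_holds I x (p, false) by case: Hf => H; [apply: H1|apply: H2].
  by move: Ht' Hf'; rewrite /lit_holds /=.
split.
  move=> H; split=> l Hl; apply: H; by [left|right].
by move=> [H1 H2] l [Hl|Hl]; [apply: H1|apply: H2].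
Qed.

Lemma key (AP Sigma : Type) (I : Sigma -> set AP) (x : Sigma) (phi : formula AP) :
  forall c, (exists mu, LF phi (mu, c) /\ msat I x mu) <-> dderiv I x phi c.
Proof.
elim: phi => [p b| | |a IHa b IHb|a IHa b IHb|a IHa|a IHa b IHb|a IHa b IHb] c /=.
- split.
    move=> [mu [[-> ->] Hs]]; split=> //; apply: Hs; reflexivity.
  move=> [Hl ->]; exists (Some [set (p, b)]); split=> //.
  by move=> l ->.
- split; first by move=> [mu [[_ ->] _]].
  by move=> ->; exists (Some set0); split.
- by split; [move=> [mu [[]]] | ].
- split.
    move=> [mu [[m1 [c1 [m2 [c2 [H1 [H2 [Hn [-> ->]]]]]]]] Hs]].
    move/msat_mmeet: Hs => [S1 S2].
    exists c1, c2; split; first by apply/IHa; exists m1.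
    by split; first by apply/IHb; exists m2.
  move=> [c1 [c2 [/IHa [m1 [H1 S1]] [/IHb [m2 [H2 S2]] ->]]]].
  have Hs : msat I x (mmeet m1 m2) by apply/msat_mmeet.
  exists (mmeet m1 m2); split=> //.
  exists m1, c1, m2, c2; do 2 split=> //; split=> //.
  by move=> E; rewrite E in Hs.
- split.
    move=> [mu [[H|H] Hs]]; [left; apply/IHa|right; apply/IHb]; by exists mu.
  move=> [/IHa [mu [H Hs]]|/IHb [mu [H Hs]]]; exists mu; split=> //; by [left|right].
- split.
    by move=> [mu [[c' [H [-> ->]]] _]].
  by move=> H; exists (Some set0); split=> //; exists c.
- split.
    move=> [mu [[H|[m [c1 [H [-> ->]]]]] Hs]]; first by left; apply/IHb; exists mu.
    right; exists c1; split=> //; apply/IHa; by exists m.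
  move=> [/IHb [mu [H Hs]]|[c1 [/IHa [m [H Hs]] ->]]]; first by exists mu; split=> //; left.
  by exists m; split=> //; right; exists m, c1.
- split.
    move=> [mu [[[m1 [c1 [m2 [c2 [H1 [H2 [Hn [-> ->]]]]]]]]|[m [c2 [H [-> ->]]]]] Hs]].
      move/msat_mmeet: Hs => [S1 S2]; left.
      exists c1, c2; split; first by apply/IHa; exists m1.
      by split; first by apply/IHb; exists m2.
    by right; exists c2; split=> //; apply/IHb; exists m.
  move=> [[c1 [c2 [/IHa [m1 [H1 S1]] [/IHb [m2 [H2 S2]] ->]]]]|[c2 [/IHb [m [H S]] ->]]].
    have Hs : msat I x (mmeet m1 m2) by apply/msat_mmeet.
    exists (mmeet m1 m2); split=> //; left.
    exists m1, c1, m2, c2; do 2 split=> //; split=> //.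
    by move=> E; rewrite E in Hs.
  by exists m; split=> //; right; exists m, c2.
Qed.

Theorem lemma8 (AP Sigma : Type) (I : Sigma -> set AP) (phi : formula AP)
  (x : Sigma) :
  pderiv I x phi = dderiv I x phi.
Proof.
by apply/seteqP; split=> c Hc; [apply: (proj1 (key _ _ I x phi c)) | apply: (proj2 (key _ _ I x phi c))].
Qed.
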